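(* Let $0<\eta\le\gamma$ and let $c$ satisfy \[ 0\le c\le\frac{\sqrt{2|2\eta-\gamma|+\gamma^2+1}-|2\eta-\gamma|-1}{4\eta^2}. \] Let $\epsilon\in[-1,1]$ and let $x$ be a random variable with values in $[-1,1]$ such that $\mathbb E[e^{-\gamma x}]\le e^{\gamma\epsilon}$. Then \[ \mathbb E\big[e^{c\eta^2x^2-\eta x}\big]\;\le\;e^{c\eta^2\epsilon^2+\eta\epsilon}. \] *)

(* Defs.v *)
From Stdlib Require Import Reals.
Open Scope R_scope.

(* [is_expectation_of x E] : E is the expectation operator of a probability
   space (sample space Omega), restricted to the random variables f(x) with
   f : R -> R continuous (these are bounded and measurable since x is a
   random variable with values in [-1,1]). *)
Definition is_expectation_of {Omega : Type} (x : Omega -> R)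
  (E : (Omega -> R) -> R) : Prop :=
  (forall f g : R -> R, continuity f -> continuity g ->
     E (fun w => f (x w) + g (x w)) = E (fun w => f (x w)) + E (fun w => g (x w))) /\
  (forall (a : R) (f : R -> R), continuity f ->
     E (fun w => a * f (x w)) = a * E (fun w => f (x w))) /\
  (forall f g : R -> R, continuity f -> continuity g ->
     (forall w, f (x w) <= g (x w)) ->
     E (fun w => f (x w)) <= E (fun w => g (x w))) /\
  E (fun _ => 1) = 1.

(* Main.v *)
Require Import Defs.
From Stdlib Require Import Reals.
From Coquelicot Require Import Coquelicot.
From Stdlib Require Import Reals Lra Psatz.
Open Scope R_scope.

Lemma cont_all (f : R -> R) : (forall u, ex_derive f u) -> continuity f.
Proof. intros H u. apply continuity_pt_filterlim. exact (@ex_derive_continuous R_AbsRing R_NormedModule f u (H u)). Qed.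

Lemma pw (A eta gamma x0 x : R) : 0 < gamma ->
  (forall u, -1 <= u <= 1 -> 2*A + (2*A*u-eta)*(2*A*u-eta+gamma) <= 0) ->
  -1 <= x0 <= 1 -> -1 <= x <= 1 ->
  exp (A*x^2 - eta*x) <= exp (A*x0^2 - eta*x0)
     + (-(2*A*x0-eta)*exp(A*x0^2-eta*x0+gamma*x0)/gamma) * (exp (-gamma*x) - exp (-gamma*x0)).
Proof.
  intros Hg HQ Hx0 Hx.
  set (D := -(2*A*x0-eta)*exp(A*x0^2-eta*x0+gamma*x0)/gamma).
  set (r := fun u => -(2*A*u-eta)*exp(A*u^2-eta*u+gamma*u)/gamma).
  set (dr := fun u => -(2*A + (2*A*u-eta)*(2*A*u-eta+gamma)) * exp(A*u^2-eta*u+gamma*u)/gamma).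
  set (psi := fun u => exp (A*x0^2 - eta*x0) + D * (exp (-gamma*u) - exp (-gamma*x0)) - exp (A*u^2 - eta*u)).
  set (dpsi := fun u => gamma * exp (-gamma*u) * (r u - D)).
  assert (Hdr : forall u, is_derive r u (dr u)).
  { intro u; unfold r, dr. auto_derive; auto.
    replace (A * (u * (u * 1)) + - (eta * u) + gamma * u) with (A*u^2-eta*u+gamma*u) by ring.
    field; lra. }
  assert (Hdpsi : forall u, is_derive psi u (dpsi u)).
  { intro u; unfold psi, dpsi, r. auto_derive; auto.
    replace (A * (u * (u * 1)) + - (eta * u)) with (A*u^2-eta*u) by ring.
    rewrite exp_plus. replace (- gamma * u) with (-(gamma*u)) by ring. rewrite exp_Ropp.
    assert (exp (gamma*u) > 0) by apply exp_pos.
    field; lra. }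
  assert (Hc : forall f df, (forall u, is_derive f u (df u)) -> forall u, continuity_pt f u).
  { intros f df H u. apply (cont_all f). intro v. exists (df v). apply H. }
  destruct (MVT_gen psi x0 x dpsi (fun u _ => Hdpsi u) (fun u _ => Hc _ _ Hdpsi u)) as [xi [Hxi Exi]].
  destruct (MVT_gen r x0 xi dr (fun u _ => Hdr u) (fun u _ => Hc _ _ Hdr u)) as [z [Hz Ez]].
  assert (Hxx : 0 <= (xi - x0) * (x - x0) /\ -1 <= xi <= 1).
  { revert Hxi; unfold Rmin, Rmax; destruct (Rle_dec x0 x); intros; split; nra. }
  assert (Hzz : -1 <= z <= 1).
  { revert Hz; unfold Rmin, Rmax; destruct (Rle_dec x0 xi); intros; nra. }
  assert (Hdz : 0 <= dr z).
  { unfold dr. specialize (HQ z Hzz). assert (exp (A * z ^ 2 - eta * z + gamma * z) > 0) by apply exp_pos.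
    unfold Rdiv. apply Rmult_le_pos; [|left; apply Rinv_0_lt_compat; lra]. nra. }
  assert (Hpsi0 : psi x0 = 0) by (unfold psi; ring).
  assert (psi x >= 0).
  { assert (Hrx : r xi - D = dr z * (xi - x0)) by (unfold D; rewrite <- Ez; unfold r; ring).
    assert (psi x = gamma * exp (- gamma * xi) * dr z * ((xi - x0) * (x - x0))).
    { rewrite <- (Rminus_0_r (psi x)), <- Hpsi0, Exi. unfold dpsi. rewrite Hrx. ring. }
    assert (exp (- gamma * xi) > 0) by apply exp_pos.
    rewrite H. apply Rle_ge. apply Rmult_le_pos; [|tauto]. apply Rmult_le_pos; [|lra]. nra. }
  unfold psi in H. fold D. lra.
Qed.

Theorem mainTheorem12 (eta gamma c eps : R) (Omega : Type)
  (x : Omega -> R) (E : (Omega -> R) -> R) :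
  0 < eta -> eta <= gamma ->
  0 <= c ->
  c <= (sqrt (2 * Rabs (2 * eta - gamma) + gamma ^ 2 + 1)
          - Rabs (2 * eta - gamma) - 1) / (4 * eta ^ 2) ->
  -1 <= eps <= 1 ->
  (forall w, -1 <= x w <= 1) ->
  is_expectation_of x E ->
  E (fun w => exp (- gamma * x w)) <= exp (gamma * eps) ->
  E (fun w => exp (c * eta ^ 2 * (x w) ^ 2 - eta * x w))
    <= exp (c * eta ^ 2 * eps ^ 2 + eta * eps).
Proof.
  intros Heta Hg Hc Hcb Heps Hx HE HEg.
  set (k := Rabs (2 * eta - gamma)) in *.
  set (S := sqrt (2 * k + gamma ^ 2 + 1)) in *.
  assert (Hk : k >= 2*eta - gamma /\ k >= gamma - 2*eta /\ k*k = (2*eta-gamma)*(2*eta-gamma)).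
  { unfold k, Rabs; destruct (Rcase_abs (2*eta-gamma)); split; try split; nra. }
  assert (HS2 : S * S = 2 * k + gamma ^ 2 + 1).
  { unfold S; apply sqrt_sqrt. nra. }
  assert (HS0 : 0 <= S) by apply sqrt_pos.
  set (w := 2 * c * eta^2).
  assert (Hw0 : 0 <= w) by (unfold w; nra).
  assert (Hw1 : 2 * w <= S - k - 1).
  { unfold w. assert (0 < 4 * eta ^ 2) by nra.
    apply (Rmult_le_compat_r (4*eta^2)) in Hcb; [|lra].
    unfold Rdiv in Hcb. rewrite Rmult_assoc, Rinv_l in Hcb; lra. }
  assert (Hw2 : w*w + w*(k+1) + eta*(eta-gamma) <= 0).
  { assert ((2*w+k+1)*(2*w+k+1) <= S*S) by (assert (0 <= k) by apply Rabs_pos; apply Rmult_le_compat; lra). nra. }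
  assert (Hweta : w <= eta) by nra.
  set (A := c * eta ^ 2).
  assert (HQ : forall u, -1 <= u <= 1 -> 2*A + (2*A*u-eta)*(2*A*u-eta+gamma) <= 0).
  { intros u Hu.
    assert (Hw : w = 2*A) by (unfold w, A; ring).
    assert (Q1 : 2*A + (2*A*1-eta)*(2*A*1-eta+gamma) <= 0).
    { replace (2*A + (2*A*1-eta)*(2*A*1-eta+gamma)) with (w*w + w*(gamma-2*eta+1) + eta*(eta-gamma)) by (rewrite Hw; ring). nra. }
    assert (Q2 : 2*A + (2*A*(-1)-eta)*(2*A*(-1)-eta+gamma) <= 0).
    { replace (2*A + (2*A*(-1)-eta)*(2*A*(-1)-eta+gamma)) with (w*w + w*(2*eta-gamma+1) + eta*(eta-gamma)) by (rewrite Hw; ring). nra. }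
    assert (HAA : 0 <= A*A) by (pose proof (Rle_0_sqr A); unfold Rsqr in *; lra).
    assert (0 <= 4*A*A*(1-u*u)) by (apply Rmult_le_pos; nra).
    nra. }
  set (D := -(2*A*(-eps)-eta)*exp(A*(-eps)^2-eta*(-eps)+gamma*(-eps))/gamma).
  assert (HD : 0 <= D).
  { unfold D. assert (exp (A*(-eps)^2-eta*(-eps)+gamma*(-eps)) > 0) by apply exp_pos.
    unfold Rdiv. apply Rmult_le_pos; [|left; apply Rinv_0_lt_compat; lra].
    assert (Hw : w = 2*A) by (unfold w, A; ring).
    apply Rmult_le_pos; [|lra].
    assert (0 <= w * (1 + eps)) by (apply Rmult_le_pos; lra). rewrite <- Hw. lra. }
  assert (Hs0 : exp (A*(-eps)^2 - eta*(-eps)) = exp (c * eta ^ 2 * eps ^ 2 + eta * eps)).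
  { f_equal. unfold A; ring. }
  assert (He0 : exp (- gamma * (-eps)) = exp (gamma * eps)) by (f_equal; ring).
  set (K := exp (c * eta ^ 2 * eps ^ 2 + eta * eps) - D * exp (gamma * eps)).
  destruct HE as [Hadd [Hhom [Hmono H1]]].
  assert (Hpw : forall u, -1 <= u <= 1 -> exp (c * eta ^ 2 * u ^ 2 - eta * u) <= K * 1 + D * exp (- gamma * u)).
  { intros u Hu. pose proof (pw A eta gamma (-eps) u ltac:(lra) HQ ltac:(lra) Hu) as P.
    fold D in P. rewrite Hs0, He0 in P. unfold A in P. unfold K. lra. }
  assert (cf : continuity (fun u => exp (c * eta ^ 2 * u ^ 2 - eta * u))).
  { apply cont_all; intro u; auto_derive; auto. }
  assert (c1 : continuity (fun u : R => K * 1)).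
  { apply cont_all; intro u; auto_derive; auto. }
  assert (c2 : continuity (fun u => D * exp (- gamma * u))).
  { apply cont_all; intro u; auto_derive; auto. }
  assert (c3 : continuity (fun u => exp (- gamma * u))).
  { apply cont_all; intro u; auto_derive; auto. }
  assert (c4 : continuity (fun u : R => 1)).
  { apply cont_all; intro u; auto_derive; auto. }
  assert (c5 : continuity (fun u => K * 1 + D * exp (- gamma * u))).
  { apply cont_all; intro u; auto_derive; auto. }
  pose proof (Hmono _ _ cf c5 (fun w => Hpw (x w) (Hx w))) as M. cbv beta in M.
  pose proof (Hadd _ _ c1 c2) as Ad. cbv beta in Ad.
  pose proof (Hhom K _ c4) as Ho1. cbv beta in Ho1.
  pose proof (Hhom D _ c3) as Ho2. cbv beta in Ho2.
  rewrite Ad, Ho1, Ho2, H1 in M.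
  apply Rmult_le_compat_l with (r := D) in HEg; [|exact HD].
  unfold K in M. unfold A in *. lra.
Qed.
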